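(* Let $\mathbb P$ be the law of a stationary simple point process on $\mathbb R^d$ with finite positive intensity $m$, and let $\gamma>0$. The following are equivalent: (i) $\mathbb E_0[\xi(\Lambda_L(z))^\gamma]<\infty$ for every $L>0$ and $z\in\mathbb R^d$; (ii) $\rho_{1+\gamma}<\infty$.
   Context: $\mathcal N$ = locally finite subsets of $\mathbb R^d$, identified with counting measures ($\xi(A)=\#(\xi\cap A)$); $\tau_x\xi=\xi-x$; stationarity: $\mathbb P(\tau_xA)=\mathbb P(A)$. Intensity $m=\mathbb E[\xi([0,1]^d)]$. $\Lambda_L(z)=z+[-L,L]^d$. $\rho_\gamma:=\mathbb E[\xi([0,1]^d)^\gamma]$. Palm distribution $\mathbb P_0(A)=\frac1m\int d\mathbb P(\xi)\sum_{x\in\xi\cap[0,1]^d}\mathbf 1_A(\tau_x\xi)$, expectation $\mathbb E_0$. *)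

(* Defs.v *)
From HB Require Import structures.
From mathcomp Require Import all_boot all_order all_algebra.
From mathcomp Require Import all_classical all_reals all_analysis.
Set Implicit Arguments. Unset Strict Implicit. Unset Printing Implicit Defensive.
Import Order.TTheory GRing.Theory Num.Theory.
Local Open Scope classical_set_scope.
Local Open Scope ring_scope.

Section PP.
Variables (R : realType) (d : nat).

Definition pt := 'rV[R]_d.

(* configurations: subsets of R^d (simple point configurations) *)
Definition cfg := set pt.

Definition box (a b : pt) : set pt :=
  [set v | forall i : 'I_d, a ord0 i <= v ord0 i <= b ord0 i].

Definition Lambda (L : R) (z : pt) : set pt :=
  [set v | forall i : 'I_d, z ord0 i - L <= v ord0 i <= z ord0 i + L].

Definition unit_cube : set pt :=
  [set v | forall i : 'I_d, 0 <= v ord0 i <= 1].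

Definition bounded_set (A : set pt) : Prop := exists L : R, A `<=` Lambda L 0.

Definition locally_finite (xi : cfg) : Prop :=
  forall A : set pt, bounded_set A -> finite_set (xi `&` A).

(* xi(A) = #(xi \cap A), in \bar R (+oo if infinite) *)
Definition cnt (xi : cfg) (A : set pt) : \bar R := counting (xi `&` A).

Definition tau (x : pt) (xi : cfg) : cfg := [set y - x | y in xi].

Definition cfg_gen : set (set cfg) :=
  [set S | exists (a b : pt) (k : \bar R), S = [set xi | cnt xi (box a b) = k]].

Definition cfgT := g_sigma_algebraType cfg_gen.

Local Open Scope ereal_scope.

Definition palmE (P : probability cfgT R) (m : R) (f : cfg -> \bar R) : \bar R :=
  (m^-1)%:E * \int[P]_(xi in setT) (\esum_(x in (xi `&` unit_cube)) f (tau x xi)).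

Definition rho (P : probability cfgT R) (g : R) : \bar R :=
  \int[P]_(xi in setT) (poweR (cnt xi unit_cube) g).

End PP.

(* Main.v *)
Require Import Defs.
From HB Require Import structures.
From mathcomp Require Import all_boot all_order all_algebra.
From mathcomp Require Import all_classical all_reals all_analysis.
From mathcomp Require Import finmap.
From mathcomp Require Import measurable_realfun lebesgue_measure.
From mathcomp Require Import lra zify.
Import Order.TTheory GRing.Theory Num.Theory.
Local Open Scope classical_set_scope.
Local Open Scope ring_scope.

Module Part1.
Local Open Scope ereal_scope.

Lemma le_int_gen d (T : measurableType d) (R : realType) (mu : set T -> \bar R)
  (f g : T -> \bar R) :
  (forall x, 0 <= f x) -> (forall x, f x <= g x) ->
  \int[mu]_(x in setT) f x <= \int[mu]_(x in setT) g x.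
Proof.
move=> f0 fg.
have g0 : forall x, 0 <= g x by move=> x; exact: le_trans (f0 x) (fg x).
rewrite /integral !patch_setT.
have ef : f^\+ = f /\ f^\- = cst 0.
  split; apply/funext => x; [apply: (ge0_funeposE (D:=setT)) | apply: (ge0_funenegE (D:=setT))]; rewrite ?in_setT //; move=> y _.
have eg : g^\+ = g /\ g^\- = cst 0.
  split; apply/funext => x; [apply: (ge0_funeposE (D:=setT)) | apply: (ge0_funenegE (D:=setT))]; rewrite ?in_setT //; move=> y _.
rewrite ef.1 ef.2 eg.1 eg.2.
apply: leeB => //.
apply: le_ereal_sup => _ [h hf <-]; exists h => //= x.
exact: le_trans (hf x) (fg x).
Qed.

Section cnt.
Context (R : realType) (T U : choiceType).

Lemma counting_ge0' {V : choiceType} (A : set V) : (0 <= @counting V R A).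
Proof. by rewrite /counting; case: ifPn; rewrite ?lee_fin// leey. Qed.

Lemma counting_inf {V : choiceType} {A : set V} : ~ finite_set A -> @counting V R A = +oo.
Proof. by move=> h; rewrite /counting asboolF. Qed.

Lemma counting_fin {V : choiceType} (A : set V) : finite_set A ->
  @counting V R A = (#|` fset_set A|)%fset%:R%:E.
Proof. by move=> h; rewrite /counting asboolT. Qed.

Lemma counting_le_img (f : T -> U) (A : set T) (B : set U) :
  B `<=` f @` A -> @counting U R B <= @counting T R A.
Proof.
move=> BA.
have [finA|infA] := pselect (finite_set A); last by rewrite (counting_inf infA) leey.
have finfA : finite_set (f @` A) by exact: finite_image.
have finB : finite_set B by exact: sub_finite_set finfA.
rewrite counting_fin// counting_fin// lee_fin ler_nat.
apply: (@leq_trans #|` fset_set (f @` A)|%fset).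
  apply: fsubset_leq_card.
  have := BA; rewrite fset_set_sub//; exact.
rewrite fset_set_image//.
exact: leq_imfset_card.
Qed.

End cnt.
Section cnt2.
Context (R : realType) (T : choiceType).
Lemma counting_le (A B : set T) : A `<=` B -> @counting T R A <= @counting T R B.
Proof. move=> AB. apply: (@counting_le_img R T T id). by move=> x Ax; exists x => //; exact: AB. Qed.

Lemma counting_U2 (A B : set T) :
  @counting T R (A `|` B) <= @counting T R A + @counting T R B.
Proof.
have nNy (C : set T) : @counting T R C != -oo.
  by rewrite gt_eqF// (lt_le_trans _ (counting_ge0' _ _))// ltNy0.
have [finA|infA] := pselect (finite_set A); last first.
  by rewrite (counting_inf _ infA) addye ?leey.
have [finB|infB] := pselect (finite_set B); last first.
  by rewrite (counting_inf _ infB) addey ?leey.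
rewrite !counting_fin// ?finite_setU//.
rewrite fset_setU// cardfsU -EFinD lee_fin -natrD ler_nat.
exact: leq_subr.
Qed.

Lemma counting_big (I : Type) (s : seq I) (F : I -> set T) :
  @counting T R (\big[setU/set0]_(j <- s) F j) <= \sum_(j <- s) @counting T R (F j).
Proof.
elim: s => [|j s IH]; first by rewrite !big_nil /counting asboolT// fset_set0.
rewrite !big_cons; apply: le_trans (counting_U2 _ _) _.
exact: leeD2l.
Qed.

End cnt2.


Section esumcnt.
Context (R : realType) (T : choiceType).

Lemma fsum_cst (A : set T) (c : \bar R) : finite_set A ->
  \sum_(x \in A) c = (#|` fset_set A|)%fset%:R%:E * c.
Proof.
move=> finA; rewrite fsbig_finite// mule_natl.
elim: (fset_set A : seq T) => [|a s IH]; first by rewrite big_nil.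
by rewrite big_cons IH /=; case: (size s) => //=; rewrite adde0.
Qed.

Lemma esum_le_cnt (A : set T) (f : T -> \bar R) (c : \bar R) :
  0 <= c -> (forall x, A x -> 0 <= f x <= c) ->
  \esum_(x in A) f x <= @counting T R A * c.
Proof.
move=> c0 hf.
have [finA|infA] := pselect (finite_set A); last first.
  rewrite (counting_inf _ infA).
  have [c0'|cpos] := eqVneq c 0.
    rewrite esum1; first by rewrite c0' mule0.
    by move=> x Ax; apply/eqP; rewrite eq_le; have /andP[-> fc] := hf x Ax; rewrite -c0' fc.
  by rewrite gt0_mulye ?leey// lt_neqAle eq_sym cpos c0.
rewrite esum_fset//; last by move=> x /set_mem /hf /andP[].
rewrite (@counting_fin R _ A finA) -(fsum_cst A c finA).
by apply: lee_fsum => // x /hf /andP[].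
Qed.

Lemma esum_ge_pow (A : set T) (f : T -> \bar R) (g : R) : (0 < g)%R ->
  (forall x, A x -> poweR (@counting T R A) g <= f x) ->
  poweR (@counting T R A) (1 + g) <= \esum_(x in A) f x.
Proof.
move=> g0 hf.
have [finA|infA] := pselect (finite_set A); last first.
  have [x Ax] : exists x, A x.
    apply/not_existsP => h; apply: infA.
    by rewrite (_ : A = set0) //; apply/seteqP; split => // y Ay; exact: (h y).
  rewrite (counting_inf _ infA) poweRyr ?gt_eqF ?addr_gt0//.
  have := hf x Ax; rewrite (counting_inf _ infA) poweRyr ?gt_eqF// => fx.
  apply: le_trans fx _.
  apply: esum_ge; exists [set x]; last by rewrite fsbig_set1.
  by split; [exact: finite_set1 | move=> y ->].
rewrite poweRD ?add_neq0_poweRD_def ?gt_eqF ?addr_gt0//.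
rewrite poweRe1 ?counting_ge0'//.
rewrite esum_fset//; last by move=> x /set_mem /hf; apply: le_trans; exact: poweR_ge0.
rewrite {1}(@counting_fin R _ A finA) -(fsum_cst A _ finA).
by apply: lee_fsum => // x /hf.
Qed.
End esumcnt.

End Part1.
Import Part1.

Set Implicit Arguments. Unset Strict Implicit.
Module Part2.
Local Open Scope ereal_scope.

Section law.
Context d (T : measurableType d) (R : realType).

Definition vv (n : nat) : \bar R := if n is n'.+1 then n'%:R%:E else +oo.

Lemma vv_inj : injective vv.
Proof.
by case=> [|n] [|m] //= /eqP; rewrite eqe ?eqr_nat => // /eqP ->.
Qed.

Definition natvalued (X : T -> \bar R) := forall t, exists n, X t = vv n.

Definition BB (X : T -> \bar R) (Y : set \bar R) (n : nat) : set T :=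
  if pselect (Y (vv n)) then X @^-1` [set vv n] else set0.

Lemma preimage_BB (X : T -> \bar R) (Y : set \bar R) : natvalued X ->
  X @^-1` Y = \bigcup_n BB X Y n.
Proof.
move=> hX; apply/seteqP; split => t /=.
  move=> Yt; have [n Xn] := hX t; exists n => //.
  by rewrite /BB; case: pselect => //; rewrite -Xn.
move=> [n _]; rewrite /BB; case: pselect => [Yn|//] Xt.
by rewrite /preimage /= Xt.
Qed.

Lemma trivIset_BB X Y : trivIset setT (BB X Y).
Proof.
move=> i j _ _ [t [Hi Hj]]; move: Hi Hj; rewrite /BB.
case: pselect => [Yi|//]; case: pselect => [Yj|//].
by rewrite /preimage /= => -> /vv_inj.
Qed.

Lemma measurable_BB X Y n :
  (forall k, measurable (X @^-1` [set vv k])) -> measurable (BB X Y n).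
Proof. by move=> h; rewrite /BB; case: (pselect (Y (vv n))) => H; [exact: h | exact: measurable0]. Qed.

Lemma natvalued_measurable X :
  natvalued X -> (forall k, measurable (X @^-1` [set vv k])) ->
  measurable_fun setT X.
Proof.
move=> hX h _ Y _; rewrite setTI preimage_BB//.
by apply: bigcupT_measurable => n; exact: measurable_BB.
Qed.

Lemma law_eq (mu : {measure set T -> \bar R}) X X' :
  natvalued X -> natvalued X' ->
  (forall k, measurable (X @^-1` [set vv k])) ->
  (forall k, measurable (X' @^-1` [set vv k])) ->
  (forall k, mu (X @^-1` [set vv k]) = mu (X' @^-1` [set vv k])) ->
  forall Y, mu (X @^-1` Y) = mu (X' @^-1` Y).
Proof.
move=> hX hX' mX mX' e Y.
rewrite !preimage_BB//.
rewrite !measure_bigcup//; try by move=> *; exact: measurable_BB.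
  by apply: eq_eseriesr => n _; rewrite /BB; case: (pselect (Y (vv n))) => H; rewrite ?e ?measure0.
all: exact: trivIset_BB.
Qed.

Lemma int_law (mu : {measure set T -> \bar R}) X X' (phi : \bar R -> \bar R) :
  natvalued X -> natvalued X' ->
  (forall k, measurable (X @^-1` [set vv k])) ->
  (forall k, measurable (X' @^-1` [set vv k])) ->
  (forall k, mu (X @^-1` [set vv k]) = mu (X' @^-1` [set vv k])) ->
  measurable_fun setT phi -> (forall x, 0 <= phi x) ->
  \int[mu]_(t in setT) phi (X t) = \int[mu]_(t in setT) phi (X' t).
Proof.
move=> hX hX' mX mX' e mphi phi0.
have mfX := @natvalued_measurable X hX mX.
have mfX' := @natvalued_measurable X' hX' mX'.
have := @ge0_integral_pushforward _ _ _ _ _ _ mfX mu setT phi measurableT mphi (fun y _ => phi0 y).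
have := @ge0_integral_pushforward _ _ _ _ _ _ mfX' mu setT phi measurableT mphi (fun y _ => phi0 y).
rewrite !preimage_setT => <- <-.
congr integral; apply/funext => Y; rewrite /pushforward.
exact: law_eq.
Qed.

End law.
Arguments vv {R}.

End Part2.
Import Part2.

Module Part3.
Local Open Scope ereal_scope.

Section geo.
Context (R : realType) (d : nat).
Local Notation pt := (pt R d).
Local Notation T := (cfgT R d).

Lemma cnt_natvalued (A : set pt) : natvalued (fun xi : T => cnt xi A).
Proof.
move=> xi; rewrite /cnt.
have [fin|inf] := pselect (finite_set (xi `&` A)).
  by exists ((#|` fset_set (xi `&` A)|)%fset).+1; rewrite counting_fin.
by exists 0%N; rewrite counting_inf.
Qed.

Lemma cnt_level_meas (a b : pt) k :
  measurable ((fun xi : T => cnt xi (box a b)) @^-1` [set vv k]).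
Proof.
apply: sub_sigma_algebra; exists a, b, (vv k).
by apply/seteqP; split => xi /=.
Qed.

Lemma cnt_tau (x a b : pt) (xi : cfg R d) :
  cnt (tau x xi) (box (a - x)%R (b - x)%R) = cnt xi (box a b).
Proof.
apply/eqP; rewrite eq_le; apply/andP; split.
  apply: (@counting_le_img R _ _ (fun y : pt => (y - x)%R)).
  move=> _ [[y xiy <-]] /= hb; exists y => //; split => // i.
  by have := hb i; rewrite !mxE => /andP[h1 h2]; apply/andP; split; [move: h1|move: h2]; rewrite lerD2r.
apply: (@counting_le_img R _ _ (fun y : pt => (y + x)%R)).
move=> y [xiy hb]; exists (y - x)%R; last by rewrite subrK.
split; first by exists y.
move=> i; rewrite !mxE lerD2r [X in _ && X]lerD2r; exact: hb.
Qed.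

Lemma tau_tauN (x : pt) (xi : cfg R d) : tau x (tau (- x)%R xi) = xi.
Proof.
apply/seteqP; split => y /=.
  by move=> [_ [z zxi <-] <-]; rewrite opprK addrK.
by move=> yxi; exists (y + x)%R; [exists y => //; rewrite opprK | rewrite addrK].
Qed.

Lemma tau_level (x a b : pt) (k : \bar R) :
  tau x @` [set xi : T | cnt xi (box a b) = k] =
  [set xi : T | cnt xi (box (a - x)%R (b - x)%R) = k].
Proof.
apply/seteqP; split => eta /=.
  by move=> [xi hxi <-]; rewrite cnt_tau.
move=> h; exists (tau (- x)%R eta); last exact: tau_tauN.
by rewrite -(cnt_tau x) tau_tauN.
Qed.

Definition one : pt := const_mx 1%R.

Lemma unit_cube_box : @unit_cube R d = box 0%R one.
Proof. by apply/seteqP; split => v /= h i; have := h i; rewrite ?mxE. Qed.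

Lemma cube_int (P : probability T R)
  (Pstat : forall (x : pt) (A : set T), measurable A -> P (tau x @` A) = P A)
  (c : pt) (p : R) :
  \int[P]_(xi in setT) poweR (cnt xi (box c (c + one)%R)) p =
  \int[P]_(xi in setT) poweR (cnt xi (box 0%R one)) p.
Proof.
apply: (@int_law _ T R P (fun xi => cnt xi (box c (c + one)%R)) (fun xi => cnt xi (box 0%R one)) (poweR ^~ p)).
- exact: cnt_natvalued.
- exact: cnt_natvalued.
- move=> k; exact: cnt_level_meas.
- move=> k; exact: cnt_level_meas.
- move=> k.
  have := Pstat c _ (cnt_level_meas c (c + one)%R k).
  have -> : (fun xi : T => cnt xi (box c (c + one)%R)) @^-1` [set vv k] =
    [set xi : T | cnt xi (box c (c + one)%R) = vv k] by [].
  have e1 : (c + one - c)%R = one by rewrite [X in (X - c)%R]addrC addrK.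
  rewrite tau_level subrr e1 => h.
  exact: (esym h).
- exact: measurable_poweR.
- by move=> x; exact: poweR_ge0.
Qed.

End geo.

End Part3.
Import Part3.

Module Part4.
Local Open Scope ereal_scope.

Section powmean.
Context (R : realType).

Lemma powR_mono (x y : \bar R) (p : R) : (0 <= p)%R -> 0 <= x -> x <= y ->
  poweR x p <= poweR y p.
Proof.
move=> p0 x0 xy; apply: (gt0_ler_poweR p0) => //; rewrite in_itv /= leey andbT //.
exact: le_trans xy.
Qed.

Lemma pow_sum_le (I : Type) (s : seq I) (a : I -> \bar R) (p : R) :
  (0 < p)%R -> (forall j, 0 <= a j) ->
  poweR (\sum_(j <- s) a j) p <=
  poweR ((size s)%:R%:E) p * \sum_(j <- s) poweR (a j) p.
Proof.
move=> p0 a0.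
have H : forall s : seq I, [/\ 0 <= foldr (fun j m => if a j <= m then m else a j) 0 s,
     \sum_(j <- s) a j <= foldr (fun j m => if a j <= m then m else a j) 0 s *+ size s &
     poweR (foldr (fun j m => if a j <= m then m else a j) 0 s) p <= \sum_(j <- s) poweR (a j) p].
  elim => [|j t [IH0 IH1 IH2]].
    by rewrite !big_nil /= powR0 ?gt_eqF.
  rewrite !big_cons [size _]/= [foldr _ _ (_ :: _)]/=.
  set m := foldr _ _ t in IH0 IH1 IH2 *.
  case: (leP (a j) m) => [aj_le|le_aj].
  - split.
    + exact: IH0.
    + rewrite muleS; exact: leeD.
    + apply: le_trans IH2 _; rewrite leeDr// poweR_ge0//.
  - split.
    + exact: a0.
    + rewrite muleS; apply: leeD => //.
      apply: le_trans IH1 _.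
      rewrite -!mule_natl; apply: lee_wpmul2l => //; exact: ltW.
    + rewrite leeDl// sume_ge0// => k _; exact: poweR_ge0.
have [H0 H1 H2] := H s.
apply: (le_trans (powR_mono (ltW p0) _ H1)).
  by rewrite sume_ge0.
rewrite -mule_natl poweRM//.
by apply: lee_wpmul2l => //; exact: poweR_ge0.
Qed.

End powmean.

End Part4.
Import Part4.

Module Part5.

Lemma in_bigsetU (T I : eqType) (s : seq I) (F : I -> set T) j x :
  j \in s -> F j x -> (\big[setU/set0]_(k <- s) F k) x.
Proof.
elim: s => [//|a s IH]; rewrite in_cons big_cons => /orP[/eqP <-|js] Fx.
  by left.
by right; exact: IH.
Qed.

Section cover.
Context (R : realType) (d : nat).
Local Notation pt := (pt R d).

Definition cc (N : nat) (j : {ffun 'I_d -> 'I_(N.+1 + N.+1)}) : pt :=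
  \row_i (((j i : nat)%:R : R) - N.+1%:R).

Lemma cover (N : nat) (v : pt) :
  (forall i, - (N.+1%:R) <= v ord0 i <= N.+1%:R) ->
  exists j : {ffun 'I_d -> 'I_(N.+1 + N.+1)},
    forall i, (cc j) ord0 i <= v ord0 i <= (cc j + one R d) ord0 i.
Proof.
move=> hv.
have kP : forall i, (minn (Num.trunc (v ord0 i + N.+1%:R)) (N.+1 + N) < N.+1 + N.+1)%N.
  by move=> i; lia.
exists [ffun i => Ordinal (kP i)] => i.
rewrite !mxE ffunE /=.
have [h1 h2] := andP (hv i).
have x0 : 0 <= v ord0 i + N.+1%:R by lra.
have t1 := truncnS_gt (v ord0 i + N.+1%:R).
have t2 : ((Num.trunc (v ord0 i + N.+1%:R))%:R <= v ord0 i + N.+1%:R) by rewrite truncn_le.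
case: (leqP (Num.trunc (v ord0 i + N.+1%:R)) (N.+1 + N)) => ht.
  move: t1 t2; set t := Num.trunc _ => t1 t2.
  rewrite -[t.+1]addn1 natrD in t1.
  apply/andP; split; lra.
have : ((N.+1 + N).+1%:R <= v ord0 i + N.+1%:R).
  by apply: le_trans t2; rewrite ler_nat.
rewrite -[(N.+1 + N).+1]addn1 !natrD => h3.
have eN : (N.+1%:R : R) = N%:R + 1 by rewrite -addn1 natrD.
apply/andP; split; lra.
Qed.

End cover.

End Part5.
Import Part5.

Unset Implicit Arguments. Set Strict Implicit.

Theorem lemma8p3 (R : realType) (d : nat) (d_gt0 : (0 < d)%N)
  (P : probability (cfgT R d) R) (m : R) (g : R)
  (Plf : {ae P, forall xi : cfgT R d, locally_finite xi})
  (Pstat : forall (x : pt R d) (A : set (cfgT R d)), measurable A ->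
      P (tau x @` A) = P A)
  (Pint : (\int[P]_(xi in setT) cnt xi (@unit_cube R d))%E = m%:E)
  (m_gt0 : 0 < m)
  (g_gt0 : 0 < g) :
  (forall (L : R) (z : pt R d), 0 < L ->
      (palmE P m (fun xi => poweR (cnt xi (Lambda L z)) g) < +oo)%E)
  <-> (rho P (1 + g) < +oo)%E.
Proof.
have p0 : 0 < 1 + g by lra.
split.
- move=> /(_ 1 0 ltr01) H.
  move: H; rewrite /palmE; set I := integral _ _ _ => H.
  have Ifin : (I < +oo)%E.
    rewrite ltey; apply/negP => /eqP HI; move: H.
    by rewrite HI gt0_muley ?lte_fin ?invr_gt0 // ltxx.
  apply: le_lt_trans Ifin.
  apply: le_int_gen => [xi|xi]; first exact: poweR_ge0.
  rewrite /cnt; apply: esum_ge_pow => // x [xix xC].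
  apply: powR_mono; [lra | exact: counting_ge0' | ].
  apply: (@counting_le_img R _ _ (fun y : pt R d => (y + x)%R)).
  move=> y [xiy yC]; exists (y - x)%R; last by rewrite subrK.
  split; first by exists y.
  move=> i; have := yC i; have := xC i; rewrite !mxE => /andP[? ?] /andP[? ?].
  apply/andP; split; lra.
- move=> Hr L z L0.
  pose x0 := (\sum_(i < d) `|z ord0 i| + L + 1)%R.
  pose N := Num.trunc x0.
  have hN : forall i, (`|z ord0 i| + L + 1 <= N.+1%:R)%R.
    move=> i; apply: le_trans (ltW (truncnS_gt x0)).
    rewrite /x0 lerD2r lerD2r (bigD1 i) //= lerDl.
    by apply: sumr_ge0 => k _.
  pose K := {ffun 'I_d -> 'I_(N.+1 + N.+1)}.
  pose s := enum K.
  pose cube (j : K) := box (@cc R d N j) (@cc R d N j + one R d)%R.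
  pose p := (1 + g)%R.
  pose G := fun xi : cfgT R d =>
    (poweR ((size s)%:R%:E) p * \sum_(j <- s) poweR (cnt xi (cube j)) p)%E.
  have mG (j : K) : measurable_fun setT (fun xi : cfgT R d => poweR (cnt xi (cube j)) p).
    have h1 := @natvalued_measurable _ (cfgT R d) R (fun xi => cnt xi (cube j)) (cnt_natvalued _) (fun k => cnt_level_meas _ _ k).
    exact: (measurableT_comp (measurable_poweR p) h1).
  have intG : (\int[P]_(xi in setT) G xi =
      poweR ((size s)%:R%:E) p * \sum_(j <- s) rho P p)%E.
    rewrite ge0_integralZl//; last 3 first.
    - apply: emeasurable_sum => j _; exact: mG.
    - by move=> xi _; apply: sume_ge0 => j _; exact: poweR_ge0.
    - exact: poweR_ge0.
    congr (_ * _)%E.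
    rewrite ge0_integral_sum//; last by move=> j xi _; exact: poweR_ge0.
    apply: eq_bigr => j _.
    rewrite /cube cube_int// /rho unit_cube_box.
    by [].
  have rfin : rho P p \is a fin_num.
    rewrite ge0_fin_numE //; apply: integral_ge0 => xi _; exact: poweR_ge0.
  have hF : forall xi : cfgT R d,
      (\esum_(x in xi `&` @unit_cube R d) poweR (cnt (tau x xi) (Lambda L z)) g <= G xi)%E.
    move=> xi.
    set S0 := cnt xi (Lambda N.+1%:R 0%R).
    have S00 : (0 <= S0)%E by exact: counting_ge0'.
    apply: (@le_trans _ _ (@counting _ R (xi `&` @unit_cube R d) * poweR S0 g)%E).
      apply: esum_le_cnt; first exact: poweR_ge0.
      move=> x [xix xC]; rewrite poweR_ge0 /=.
      apply: powR_mono; [lra | exact: counting_ge0' | ].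
      apply: (@counting_le_img R _ _ (fun y : pt R d => (y - x)%R)).
      move=> _ [[y xiy <-] hb]; exists y => //; split => // i.
      have := hb i; have := xC i; have := hN i; rewrite !mxE => h1 /andP[h2 h3] /andP[h4 h5].
      have := ler_norm (z ord0 i); have := ler_norm (- z ord0 i); rewrite normrN => h6 h7.
      apply/andP; split; lra.
    apply: (@le_trans _ _ (S0 * poweR S0 g)%E).
      apply: lee_wpmul2r; first exact: poweR_ge0.
      apply: counting_le => y [xiy yC]; split => // i.
      have := yC i; rewrite !mxE => /andP[h1 h2].
      have : (1 <= N.+1%:R :> R)%R by rewrite ler1n.
      move=> h3; apply/andP; split; lra.
    have -> : (S0 * poweR S0 g = poweR S0 p)%E.
      rewrite /p poweRD ?add_neq0_poweRD_def ?gt_eqF //.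
      by rewrite poweRe1.
    rewrite /G; apply: (@le_trans _ _ (poweR (\sum_(j <- s) cnt xi (cube j)) p)%E); last first.
      by apply: pow_sum_le => // j; exact: counting_ge0'.
    apply: powR_mono; [exact: ltW p0 | exact: S00 | ].
    rewrite /S0 /cnt.
    apply: (le_trans _ (@counting_big R _ _ s (fun j => xi `&` cube j))).
    apply: counting_le => y [xiy yB].
    have hy : forall i, (- (N.+1%:R) <= y ord0 i <= N.+1%:R)%R.
      by move=> i; have := yB i; rewrite ?mxE => /andP[h1 h2]; apply/andP; split; lra.
    have [j hj] := cover hy.
    apply: (@in_bigsetU _ _ s (fun j => xi `&` cube j) j y); first by rewrite mem_enum.
    by split.
  rewrite /palmE.
  apply: (@le_lt_trans _ _ ((m^-1)%:E * \int[P]_(xi in setT) G xi)%E).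
    apply: lee_wpmul2l; first by rewrite lee_fin invr_ge0 ltW.
    apply: le_int_gen hF => xi; apply: esum_ge0 => x _; exact: poweR_ge0.
  rewrite intG ltey_eq; apply/orP; left.
  rewrite fin_numM // fin_numM //.
  rewrite sum_fin_num; apply/allP => x /mapP [j _ ->]; exact: rfin.
Qed.
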